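(* Let $\mathcal{A}$ and $\mathcal{P}$ be cartesian categories (categories with finite limits) and let $\mathcal{D}\dashv\mathcal{C}:\mathcal{A}\rightleftarrows\mathcal{P}$ be an adjunction with left adjoint $\mathcal{D}:\mathcal{A}\to\mathcal{P}$. Let $S$ be an object of $\mathcal{A}$ such that the unique morphism $!:S\to 1$ is an effective descent morphism and the sliced functor $\mathcal{D}_S:\mathcal{A}/S\to\mathcal{P}/\mathcal{D}S$ is an equivalence of categories. Then there exists a groupoid $\mathbb{G}$ internal to $\mathcal{P}$ such that $\mathcal{A}$ is equivalent to the category $[\mathbb{G},\mathcal{P}]$ of $\mathbb{G}$-objects in $\mathcal{P}$.
   Context: For a category with pullbacks and a morphism $f:X\to Y$, $f^*:\mathcal{A}/Y\to\mathcal{A}/X$ denotes pullback along $f$, which has left adjoint $\Sigma_f$ (postcomposition with $f$). A morphism $f$ is an effective descent morphism if $f^*$ is monadic; for $!:S\to 1$ this means the pullback functor $S^*:\mathcal{A}\to\mathcal{A}/S$, $A\mapsto (\pi_1:S\times A\to S)$, is monadic. The sliced functor $\mathcal{D}_S:\mathcal{A}/S\to\mathcal{P}/\mathcal{D}S$ sends an object $g:V\to S$ to $\mathcal{D}g:\mathcal{D}V\to\mathcal{D}S$ (it is left adjoint to the functor sending $h:Z\to\mathcal{D}S$ to the pullback of $\mathcal{C}h:\mathcal{C}Z\to\mathcal{C}\mathcal{D}S$ along the unit $\eta_S:S\to\mathcal{C}\mathcal{D}S$). For an internal groupoid $\mathbb{G}$ in $\mathcal{P}$, $[\mathbb{G},\mathcal{P}]$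 denotes the category of objects of $\mathcal{P}$ equipped with an (internal) action of $\mathbb{G}$, with equivariant morphisms. *)

(* Defs.v *)
From Stdlib Require Import ProofIrrelevance.
Set Implicit Arguments.
Unset Strict Implicit.

Record Category : Type := {
  ob :> Type;
  hom : ob -> ob -> Type;
  idm : forall a, hom a a;
  comp : forall a b c, hom b c -> hom a b -> hom a c;
  comp_id_l : forall a b (f : hom a b), comp (idm b) f = f;
  comp_id_r : forall a b (f : hom a b), comp f (idm a) = f;
  comp_assoc : forall a b c d (h : hom c d) (g : hom b c) (f : hom a b),
      comp h (comp g f) = comp (comp h g) f }.
Arguments hom {_} _ _.
Arguments idm {_} _.
Arguments comp {_ _ _ _} _ _.
Arguments comp_id_l {_ _ _} _.
Arguments comp_id_r {_ _ _} _.
Arguments comp_assoc {_ _ _ _ _} _ _ _.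

Notation "g ∘ f" := (comp g f) (at level 40, left associativity).

Record Functor (C D : Category) : Type := {
  fobj :> C -> D;
  fmap : forall a b, hom a b -> hom (fobj a) (fobj b);
  fmap_id : forall a, fmap (idm a) = idm (fobj a);
  fmap_comp : forall a b c (g : hom b c) (f : hom a b),
      fmap (g ∘ f) = fmap g ∘ fmap f }.
Arguments fmap {_ _} _ {_ _} _.
Arguments fmap_id {_ _} _ _.
Arguments fmap_comp {_ _} _ {_ _ _} _ _.

Definition is_iso (C : Category) (a b : C) (f : hom a b) : Prop :=
  exists g : hom b a, g ∘ f = idm a /\ f ∘ g = idm b.

Definition IsEquivalence (C D : Category) (F : Functor C D) : Prop :=
  exists (G : Functor D C) (eta : forall a : C, hom a (G (F a)))
         (eps : forall b : D, hom (F (G b)) b),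
    (forall a, is_iso (eta a)) /\
    (forall a a' (f : hom a a'), fmap G (fmap F f) ∘ eta a = eta a' ∘ f) /\
    (forall b, is_iso (eps b)) /\
    (forall b b' (g : hom b b'), g ∘ eps b = eps b' ∘ fmap F (fmap G g)).

Definition Equivalent (C D : Category) : Prop :=
  exists F : Functor C D, IsEquivalence F.

Record Adjunction (C D : Category) (F : Functor C D) (U : Functor D C) : Type := {
  adj_unit : forall a : C, hom a (U (F a));
  adj_counit : forall b : D, hom (F (U b)) b;
  adj_unit_nat : forall a a' (f : hom a a'),
      fmap U (fmap F f) ∘ adj_unit a = adj_unit a' ∘ f;
  adj_counit_nat : forall b b' (g : hom b b'),
      g ∘ adj_counit b = adj_counit b' ∘ fmap F (fmap U g);
  adj_triangle_F : forall a, adj_counit (F a) ∘ fmap F (adj_unit a) = idm (F a);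
  adj_triangle_U : forall b, fmap U (adj_counit b) ∘ adj_unit (U b) = idm (U b) }.
Arguments adj_unit {_ _ _ _} _ _.
Arguments adj_counit {_ _ _ _} _ _.
Arguments adj_unit_nat {_ _ _ _} _ {_ _} _.
Arguments adj_counit_nat {_ _ _ _} _ {_ _} _.
Arguments adj_triangle_F {_ _ _ _} _ _.
Arguments adj_triangle_U {_ _ _ _} _ _.

Record Pullback (C : Category) (x y z : C) (f : hom x z) (g : hom y z) : Type := {
  pb_ob : C;
  pb_p1 : hom pb_ob x;
  pb_p2 : hom pb_ob y;
  pb_comm : f ∘ pb_p1 = g ∘ pb_p2;
  pb_pair : forall w (a : hom w x) (b : hom w y), f ∘ a = g ∘ b -> hom w pb_ob;
  pb_pair_p1 : forall w (a : hom w x) (b : hom w y) (H : f ∘ a = g ∘ b),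
      pb_p1 ∘ pb_pair H = a;
  pb_pair_p2 : forall w (a : hom w x) (b : hom w y) (H : f ∘ a = g ∘ b),
      pb_p2 ∘ pb_pair H = b;
  pb_uniq : forall w (u v : hom w pb_ob),
      pb_p1 ∘ u = pb_p1 ∘ v -> pb_p2 ∘ u = pb_p2 ∘ v -> u = v }.
Arguments pb_ob {_ _ _ _ _ _} _.
Arguments pb_p1 {_ _ _ _ _ _} _.
Arguments pb_p2 {_ _ _ _ _ _} _.
Arguments pb_comm {_ _ _ _ _ _} _.
Arguments pb_pair {_ _ _ _ _ _} _ {_} _ _ _.
Arguments pb_pair_p1 {_ _ _ _ _ _} _ {_} _ _ _.
Arguments pb_pair_p2 {_ _ _ _ _ _} _ {_} _ _ _.
Arguments pb_uniq {_ _ _ _ _ _} _ {_} _ _ _ _.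

Lemma pb_pair_ext (C : Category) (x y z : C) (f : hom x z) (g : hom y z)
  (P : Pullback f g) w (a a' : hom w x) (b b' : hom w y)
  (H : f ∘ a = g ∘ b) (H' : f ∘ a' = g ∘ b') :
  a = a' -> b = b' -> pb_pair P a b H = pb_pair P a' b' H'.
Proof. intros -> ->. f_equal. apply proof_irrelevance. Qed.

(** A cartesian category (category with finite limits), presented with a
    chosen terminal object and chosen pullbacks. *)
Record FinLimCat : Type := {
  flc_cat :> Category;
  term : flc_cat;
  term_hom : forall a : flc_cat, hom a term;
  term_uniq : forall (a : flc_cat) (f g : hom a term), f = g;
  pullback : forall (x y z : flc_cat) (f : hom x z) (g : hom y z), Pullback f g }.
Arguments term {_}.
Arguments term_hom {_} _.
Arguments pullback {_ _ _ _} _ _.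

Section Slice.
Variables (C : Category) (s : C).

Definition sl_ob := { v : C & hom v s }.
Definition sl_hom (a b : sl_ob) :=
  { h : hom (projT1 a) (projT1 b) | projT2 b ∘ h = projT2 a }.

Lemma sl_hom_eq a b (u v : sl_hom a b) : proj1_sig u = proj1_sig v -> u = v.
Proof. destruct u, v; simpl; intros ->; f_equal; apply proof_irrelevance. Qed.

Definition sl_id (a : sl_ob) : sl_hom a a := exist _ (idm _) (comp_id_r _).

Lemma sl_comp_proof a b c (h : sl_hom b c) (g : sl_hom a b) :
  projT2 c ∘ (proj1_sig h ∘ proj1_sig g) = projT2 a.
Proof.
  rewrite comp_assoc, (proj2_sig h). exact (proj2_sig g).
Qed.

Definition sl_comp a b c (h : sl_hom b c) (g : sl_hom a b) : sl_hom a c :=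
  exist _ (proj1_sig h ∘ proj1_sig g) (sl_comp_proof h g).

Lemma sl_id_l a b (f : sl_hom a b) : sl_comp (sl_id b) f = f.
Proof. apply sl_hom_eq; simpl; apply comp_id_l. Qed.
Lemma sl_id_r a b (f : sl_hom a b) : sl_comp f (sl_id a) = f.
Proof. apply sl_hom_eq; simpl; apply comp_id_r. Qed.
Lemma sl_assoc a b c d (h : sl_hom c d) (g : sl_hom b c) (f : sl_hom a b) :
  sl_comp h (sl_comp g f) = sl_comp (sl_comp h g) f.
Proof. apply sl_hom_eq; simpl; apply comp_assoc. Qed.

Definition Slice : Category :=
  {| ob := sl_ob; hom := sl_hom; idm := sl_id; comp := sl_comp;
     comp_id_l := sl_id_l; comp_id_r := sl_id_r; comp_assoc := sl_assoc |}.
End Slice.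

Section Sliced.
Variables (C D : Category) (F : Functor C D) (S : C).

Definition sliced_obj (a : Slice S) : Slice (F S) :=
  existT _ (F (projT1 a)) (fmap F (projT2 a)).

Lemma sliced_map_proof (a b : Slice S) (h : hom a b) :
  projT2 (sliced_obj b) ∘ fmap F (proj1_sig h) = projT2 (sliced_obj a).
Proof. simpl. rewrite <- fmap_comp. f_equal. exact (proj2_sig h). Qed.

Definition sliced_map (a b : Slice S) (h : hom a b) :
  hom (sliced_obj a) (sliced_obj b) :=
  exist _ (fmap F (proj1_sig h)) (sliced_map_proof h).

Definition sliced_functor : Functor (Slice S) (Slice (F S)).
Proof.
  refine {| fobj := sliced_obj; fmap := sliced_map |}.
  - intros a; apply sl_hom_eq; simpl; apply fmap_id.
  - intros a b c g f; apply sl_hom_eq; simpl; apply fmap_comp.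
Defined.
End Sliced.

Section PullbackFunctor.
Variables (L : FinLimCat) (x y : L) (f : hom x y).

Definition pbf_obj (a : Slice y) : Slice x :=
  existT _ (pb_ob (pullback f (projT2 a))) (pb_p1 (pullback f (projT2 a))).

Lemma pbf_map_comm (a b : Slice y) (h : hom a b) :
  f ∘ pb_p1 (pullback f (projT2 a)) =
  projT2 b ∘ (proj1_sig h ∘ pb_p2 (pullback f (projT2 a))).
Proof. rewrite comp_assoc, (proj2_sig h). apply pb_comm. Qed.

Definition pbf_map (a b : Slice y) (h : hom a b) : hom (pbf_obj a) (pbf_obj b) :=
  exist _ (pb_pair (pullback f (projT2 b)) _ _ (pbf_map_comm h))
          (pb_pair_p1 _ _ _ _).

Definition pullback_functor : Functor (Slice y) (Slice x).
Proof.
  refine {| fobj := pbf_obj; fmap := pbf_map |}.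
  - intros a; apply sl_hom_eq; simpl.
    apply pb_uniq.
    + rewrite pb_pair_p1, comp_id_r. reflexivity.
    + rewrite pb_pair_p2, comp_id_r. simpl. apply comp_id_l.
  - intros a b c g h; apply sl_hom_eq; simpl.
    apply pb_uniq.
    + rewrite pb_pair_p1, comp_assoc, pb_pair_p1, pb_pair_p1. reflexivity.
    + etransitivity; [apply pb_pair_p2|].
      rewrite (comp_assoc (pb_p2 _)).
      etransitivity; [|apply f_equal2; [apply eq_sym, pb_pair_p2|reflexivity]].
      etransitivity; [apply eq_sym, comp_assoc|].
      etransitivity; [|apply comp_assoc].
      apply f_equal. apply eq_sym, pb_pair_p2.
Defined.
End PullbackFunctor.

(** * Monadic functors and effective descent morphisms *)

Section EilenbergMoore.
Variables (C B : Category) (F : Functor C B) (U : Functor B C)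
  (adj : Adjunction F U).

(** Algebras for the monad [T = U F] with multiplication [U ε F]. *)
Record em_ob : Type := {
  alg_ob : C;
  alg_str : hom (U (F alg_ob)) alg_ob;
  alg_unit : alg_str ∘ adj_unit adj alg_ob = idm alg_ob;
  alg_mult : alg_str ∘ fmap U (fmap F alg_str) =
             alg_str ∘ fmap U (adj_counit adj (F alg_ob)) }.

Definition em_hom (a b : em_ob) :=
  { h : hom (alg_ob a) (alg_ob b) |
    h ∘ alg_str a = alg_str b ∘ fmap U (fmap F h) }.

Lemma em_hom_eq a b (u v : em_hom a b) : proj1_sig u = proj1_sig v -> u = v.
Proof. destruct u, v; simpl; intros ->; f_equal; apply proof_irrelevance. Qed.

Lemma em_id_proof (a : em_ob) :
  idm (alg_ob a) ∘ alg_str a = alg_str a ∘ fmap U (fmap F (idm (alg_ob a))).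
Proof. rewrite !fmap_id, comp_id_l, comp_id_r. reflexivity. Qed.

Definition em_id (a : em_ob) : em_hom a a := exist _ (idm _) (em_id_proof a).

Lemma em_comp_proof a b c (h : em_hom b c) (g : em_hom a b) :
  (proj1_sig h ∘ proj1_sig g) ∘ alg_str a =
  alg_str c ∘ fmap U (fmap F (proj1_sig h ∘ proj1_sig g)).
Proof.
  rewrite <- comp_assoc, (proj2_sig g), comp_assoc, (proj2_sig h).
  rewrite !fmap_comp. apply eq_sym, comp_assoc.
Qed.

Definition em_comp a b c (h : em_hom b c) (g : em_hom a b) : em_hom a c :=
  exist _ (proj1_sig h ∘ proj1_sig g) (em_comp_proof h g).

Definition EM : Category.
Proof.
  refine {| ob := em_ob; hom := em_hom; idm := em_id; comp := em_comp |}.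
  - intros; apply em_hom_eq; simpl; apply comp_id_l.
  - intros; apply em_hom_eq; simpl; apply comp_id_r.
  - intros; apply em_hom_eq; simpl; apply comp_assoc.
Defined.

Lemma cmp_mult (b : B) :
  fmap U (adj_counit adj b) ∘ fmap U (fmap F (fmap U (adj_counit adj b))) =
  fmap U (adj_counit adj b) ∘ fmap U (adj_counit adj (F (U b))).
Proof.
  rewrite <- !fmap_comp. f_equal. apply eq_sym, adj_counit_nat.
Qed.

Definition cmp_obj (b : B) : EM :=
  {| alg_ob := U b; alg_str := fmap U (adj_counit adj b);
     alg_unit := adj_triangle_U adj b; alg_mult := cmp_mult b |}.

Lemma cmp_map_proof (b b' : B) (g : hom b b') :
  fmap U g ∘ alg_str (cmp_obj b) = alg_str (cmp_obj b') ∘ fmap U (fmap F (fmap U g)).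
Proof. simpl. rewrite <- !fmap_comp. f_equal. apply adj_counit_nat. Qed.

Definition cmp_map (b b' : B) (g : hom b b') : hom (cmp_obj b) (cmp_obj b') :=
  exist _ (fmap U g) (cmp_map_proof g).

Definition comparison : Functor B EM.
Proof.
  refine {| fobj := cmp_obj; fmap := cmp_map |}.
  - intros; apply em_hom_eq; simpl; apply fmap_id.
  - intros; apply em_hom_eq; simpl; apply fmap_comp.
Defined.
End EilenbergMoore.

Definition monadic (B C : Category) (U : Functor B C) : Prop :=
  exists (F : Functor C B) (adj : Adjunction F U), IsEquivalence (comparison adj).

Definition effective_descent (L : FinLimCat) (x y : L) (f : hom x y) : Prop :=
  monadic (pullback_functor f).

(** * Internal groupoids and their categories of actions *)

(** An internal groupoid in [P].  [gcomp] is defined on the object of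
    composable pairs [(g, f)] with [s g = t f] (the pullback of [s] along [t]),
    and sends it to [g ∘ f].  The axioms involving iterated pullbacks are
    stated on generalized elements (equivalent by the universal property). *)
Record InternalGroupoid (P : FinLimCat) : Type := {
  g0 : P;
  g1 : P;
  gsrc : hom g1 g0;
  gtgt : hom g1 g0;
  gid : hom g0 g1;
  gcomp : hom (pb_ob (pullback gsrc gtgt)) g1;
  ginv : hom g1 g1;
  gsrc_id : gsrc ∘ gid = idm g0;
  gtgt_id : gtgt ∘ gid = idm g0;
  gsrc_comp : gsrc ∘ gcomp = gsrc ∘ pb_p2 (pullback gsrc gtgt);
  gtgt_comp : gtgt ∘ gcomp = gtgt ∘ pb_p1 (pullback gsrc gtgt);
  gcomp_id_l : forall w (f : hom w g1) (H : gsrc ∘ (gid ∘ (gtgt ∘ f)) = gtgt ∘ f),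
      gcomp ∘ pb_pair (pullback gsrc gtgt) (gid ∘ (gtgt ∘ f)) f H = f;
  gcomp_id_r : forall w (g : hom w g1) (H : gsrc ∘ g = gtgt ∘ (gid ∘ (gsrc ∘ g))),
      gcomp ∘ pb_pair (pullback gsrc gtgt) g (gid ∘ (gsrc ∘ g)) H = g;
  gcomp_assoc : forall w (h g f : hom w g1)
      (H1 : gsrc ∘ h = gtgt ∘ g) (H2 : gsrc ∘ g = gtgt ∘ f)
      (H3 : gsrc ∘ (gcomp ∘ pb_pair (pullback gsrc gtgt) h g H1) = gtgt ∘ f)
      (H4 : gsrc ∘ h = gtgt ∘ (gcomp ∘ pb_pair (pullback gsrc gtgt) g f H2)),
      gcomp ∘ pb_pair (pullback gsrc gtgt)
                (gcomp ∘ pb_pair (pullback gsrc gtgt) h g H1) f H3 =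
      gcomp ∘ pb_pair (pullback gsrc gtgt)
                h (gcomp ∘ pb_pair (pullback gsrc gtgt) g f H2) H4;
  gsrc_inv : gsrc ∘ ginv = gtgt;
  gtgt_inv : gtgt ∘ ginv = gsrc;
  ginv_l : forall w (g : hom w g1) (H : gsrc ∘ (ginv ∘ g) = gtgt ∘ g),
      gcomp ∘ pb_pair (pullback gsrc gtgt) (ginv ∘ g) g H = gid ∘ (gsrc ∘ g);
  ginv_r : forall w (g : hom w g1) (H : gsrc ∘ g = gtgt ∘ (ginv ∘ g)),
      gcomp ∘ pb_pair (pullback gsrc gtgt) g (ginv ∘ g) H = gid ∘ (gtgt ∘ g) }.
Arguments g0 {_} _.
Arguments g1 {_} _.
Arguments gsrc {_} _.
Arguments gtgt {_} _.
Arguments gid {_} _.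
Arguments gcomp {_} _.
Arguments ginv {_} _.

Section GObjects.
Variables (P : FinLimCat) (G : InternalGroupoid P).

Notation C2 := (pullback (gsrc G) (gtgt G)).

Record gobj : Type := {
  go_ob : P;
  go_anchor : hom go_ob (g0 G);
  go_act : hom (pb_ob (pullback (gsrc G) go_anchor)) go_ob;
  go_anchor_act : go_anchor ∘ go_act = gtgt G ∘ pb_p1 (pullback (gsrc G) go_anchor);
  go_unit : forall w (x : hom w go_ob)
      (H : gsrc G ∘ (gid G ∘ (go_anchor ∘ x)) = go_anchor ∘ x),
      go_act ∘ pb_pair (pullback (gsrc G) go_anchor) (gid G ∘ (go_anchor ∘ x)) x H = x;
  go_assoc : forall w (g f : hom w (g1 G)) (x : hom w go_ob)
      (H1 : gsrc G ∘ g = gtgt G ∘ f) (H2 : gsrc G ∘ f = go_anchor ∘ x)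
      (H3 : gsrc G ∘ (gcomp G ∘ pb_pair C2 g f H1) = go_anchor ∘ x)
      (H4 : gsrc G ∘ g =
            go_anchor ∘ (go_act ∘ pb_pair (pullback (gsrc G) go_anchor) f x H2)),
      go_act ∘ pb_pair (pullback (gsrc G) go_anchor) (gcomp G ∘ pb_pair C2 g f H1) x H3 =
      go_act ∘ pb_pair (pullback (gsrc G) go_anchor)
                 g (go_act ∘ pb_pair (pullback (gsrc G) go_anchor) f x H2) H4 }.

Definition is_equivariant (a b : gobj) (h : hom (go_ob a) (go_ob b)) : Prop :=
  go_anchor b ∘ h = go_anchor a /\
  forall w (g : hom w (g1 G)) (x : hom w (go_ob a))
    (H : gsrc G ∘ g = go_anchor a ∘ x) (H' : gsrc G ∘ g = go_anchor b ∘ (h ∘ x)),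
    h ∘ (go_act a ∘ pb_pair (pullback (gsrc G) (go_anchor a)) g x H) =
    go_act b ∘ pb_pair (pullback (gsrc G) (go_anchor b)) g (h ∘ x) H'.

Definition gobj_hom (a b : gobj) := { h : hom (go_ob a) (go_ob b) | is_equivariant h }.

Lemma gobj_hom_eq a b (u v : gobj_hom a b) : proj1_sig u = proj1_sig v -> u = v.
Proof. destruct u, v; simpl; intros ->; f_equal; apply proof_irrelevance. Qed.

Lemma gobj_id_proof (a : gobj) : is_equivariant (idm (go_ob a)).
Proof.
  split; [apply comp_id_r|].
  intros w g x H H'. rewrite comp_id_l. apply f_equal.
  apply pb_pair_ext; [reflexivity|]. apply eq_sym, comp_id_l.
Qed.

Definition gobj_id (a : gobj) : gobj_hom a a := exist _ (idm _) (gobj_id_proof a).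

Lemma gobj_comp_proof a b c (k : gobj_hom b c) (h : gobj_hom a b) :
  is_equivariant (proj1_sig k ∘ proj1_sig h).
Proof.
  destruct k as [k [Ek Ak]], h as [h [Eh Ah]]; simpl.
  split.
  - rewrite comp_assoc, Ek. exact Eh.
  - intros w g x H H'.
    assert (H'' : gsrc G ∘ g = go_anchor b ∘ (h ∘ x)).
    { rewrite comp_assoc, Eh. exact H. }
    assert (H3 : gsrc G ∘ g = go_anchor c ∘ (k ∘ (h ∘ x))).
    { rewrite comp_assoc, Ek. exact H''. }
    rewrite <- comp_assoc, (Ah w g x H H''), (Ak w g (h ∘ x) H'' H3).
    apply f_equal, pb_pair_ext; [reflexivity|]. apply comp_assoc.
Qed.

Definition gobj_comp a b c (k : gobj_hom b c) (h : gobj_hom a b) : gobj_hom a c :=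
  exist _ (proj1_sig k ∘ proj1_sig h) (gobj_comp_proof k h).

Definition GObjCat : Category.
Proof.
  refine {| ob := gobj; hom := gobj_hom; idm := gobj_id; comp := gobj_comp |}.
  - intros; apply gobj_hom_eq; simpl; apply comp_id_l.
  - intros; apply gobj_hom_eq; simpl; apply comp_id_r.
  - intros; apply gobj_hom_eq; simpl; apply comp_assoc.
Defined.
End GObjects.

(* Main.v *)
Require Import Defs.
From Stdlib Require Import ProofIrrelevance ClassicalEpsilon.
Set Implicit Arguments.
Unset Strict Implicit.

Lemma iso_epi (C : Category) (a b c : C) (j : hom a b) (f g : hom b c) :
  is_iso j -> f ∘ j = g ∘ j -> f = g.
Proof.
  intros [k [Hk1 Hk2]] E.
  rewrite <- (comp_id_r f), <- (comp_id_r g), <- Hk2, !comp_assoc, E. reflexivity.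
Qed.

Lemma iso_mono (C : Category) (a b c : C) (j : hom b c) (f g : hom a b) :
  is_iso j -> j ∘ f = j ∘ g -> f = g.
Proof.
  intros [k [Hk1 Hk2]] E.
  rewrite <- (comp_id_l f), <- (comp_id_l g), <- Hk1, <- !comp_assoc, E. reflexivity.
Qed.

Lemma pb_pair_comp (C : Category) (x y z : C) (f : hom x z) (g : hom y z) (Pb : Pullback f g)
  w w' (a : hom w x) (b : hom w y) (H : f ∘ a = g ∘ b) (u : hom w' w)
  (a' : hom w' x) (b' : hom w' y) (H' : f ∘ a' = g ∘ b') :
  a ∘ u = a' -> b ∘ u = b' -> pb_pair Pb a b H ∘ u = pb_pair Pb a' b' H'.
Proof.
  intros Ea Eb. apply pb_uniq.
  - rewrite comp_assoc, !pb_pair_p1. exact Ea.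
  - rewrite comp_assoc, !pb_pair_p2. exact Eb.
Qed.

Lemma pb_pair_eta (C : Category) (x y z : C) (f : hom x z) (g : hom y z) (Pb : Pullback f g)
  w (u : hom w (pb_ob Pb)) (a : hom w x) (b : hom w y) (H : f ∘ a = g ∘ b) :
  pb_p1 Pb ∘ u = a -> pb_p2 Pb ∘ u = b -> pb_pair Pb a b H = u.
Proof.
  intros Ea Eb. apply pb_uniq.
  - rewrite pb_pair_p1. auto.
  - rewrite pb_pair_p2. auto.
Qed.

Section EquivFacts.
Variables (C D : Category) (F : Functor C D) (HF : IsEquivalence F).

Lemma eqv_faithful a b (f g : hom a b) : fmap F f = fmap F g -> f = g.
Proof.
  destruct HF as (G & eta & eps & Hi & Hn & _).
  intros E. apply (iso_mono (Hi b)).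
  rewrite <- !Hn, E. reflexivity.
Qed.

Lemma eqv_full a b (k : hom (F a) (F b)) : exists f, fmap F f = k.
Proof.
  destruct HF as (G & eta & eps & Hi & Hn & Hi' & Hn').
  assert (Gfaith : forall x y (g1 g2 : hom x y), fmap G g1 = fmap G g2 -> g1 = g2).
  { intros x y g1 g2 E. apply (iso_epi (Hi' x)). rewrite !Hn', E. reflexivity. }
  destruct (Hi b) as [ib [Hib1 Hib2]].
  exists (ib ∘ (fmap G k ∘ eta a)).
  apply Gfaith. apply (iso_epi (Hi a)).
  rewrite Hn, !comp_assoc, Hib2, comp_id_l. reflexivity.
Qed.

Lemma eqv_es b : exists a (j : hom (F a) b), is_iso j.
Proof.
  destruct HF as (G & eta & eps & Hi & Hn & Hi' & Hn').
  exists (G b), (eps b). apply Hi'.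
Qed.
End EquivFacts.

Section FFES.
Variables (C D : Category) (F : Functor C D).
Hypothesis Hfa : forall a b (f g : hom a b), fmap F f = fmap F g -> f = g.
Hypothesis Hfu : forall a b (k : hom (F a) (F b)), exists f, fmap F f = k.
Hypothesis Hes : forall b, exists a (j : hom (F a) b), is_iso j.

Definition pk_ob (b : D) : C := proj1_sig (constructive_indefinite_description _ (Hes b)).
Lemma pk_j_ex b : exists j : hom (F (pk_ob b)) b, is_iso j.
Proof. exact (proj2_sig (constructive_indefinite_description _ (Hes b))). Qed.
Definition pk_j b : hom (F (pk_ob b)) b := proj1_sig (constructive_indefinite_description _ (pk_j_ex b)).
Lemma pk_j_iso b : is_iso (pk_j b).
Proof. exact (proj2_sig (constructive_indefinite_description _ (pk_j_ex b))). Qed.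
Definition pk_ji b : hom b (F (pk_ob b)) := proj1_sig (constructive_indefinite_description _ (pk_j_iso b)).
Lemma pk_ji_spec b : pk_ji b ∘ pk_j b = idm _ /\ pk_j b ∘ pk_ji b = idm _.
Proof. exact (proj2_sig (constructive_indefinite_description _ (pk_j_iso b))). Qed.
Definition pre a b (k : hom (F a) (F b)) : hom a b := proj1_sig (constructive_indefinite_description _ (Hfu k)).
Lemma pre_spec a b (k : hom (F a) (F b)) : fmap F (pre k) = k.
Proof. exact (proj2_sig (constructive_indefinite_description _ (Hfu k))). Qed.

Definition Ginv_map b b' (g : hom b b') : hom (pk_ob b) (pk_ob b') := pre (pk_ji b' ∘ (g ∘ pk_j b)).

Definition Ginv : Functor D C.
Proof.
  refine {| fobj := pk_ob; fmap := Ginv_map |}.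
  - intros b. apply Hfa. unfold Ginv_map. rewrite pre_spec, fmap_id, comp_id_l.
    apply (pk_ji_spec b).
  - intros b1 b2 b3 g f. apply Hfa. unfold Ginv_map. rewrite fmap_comp, !pre_spec.
    rewrite <- !comp_assoc. f_equal. f_equal. rewrite !comp_assoc.
    rewrite (proj2 (pk_ji_spec b2)), comp_id_l. reflexivity.
Defined.

Lemma ffes_equiv : IsEquivalence F.
Proof.
  exists Ginv.
  exists (fun a => pre (pk_ji (F a))).
  exists pk_j.
  split; [|split; [|split]].
  - intros a. exists (pre (pk_j (F a))). split.
    + apply Hfa. rewrite fmap_comp, !pre_spec, fmap_id. apply (pk_ji_spec (F a)).
    + apply Hfa. rewrite fmap_comp, !pre_spec, fmap_id. apply (pk_ji_spec (F a)).
  - intros a a' f. apply Hfa. rewrite !fmap_comp. simpl. unfold Ginv_map.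
    rewrite !pre_spec. rewrite <- !comp_assoc. f_equal.
    rewrite (proj2 (pk_ji_spec (F a))), comp_id_r. reflexivity.
  - intros b. apply pk_j_iso.
  - intros b b' g. simpl. unfold Ginv_map. rewrite pre_spec.
    rewrite !comp_assoc, (proj2 (pk_ji_spec b')), comp_id_l. reflexivity.
Qed.
End FFES.

Section TwoAdj.
Variables (C B : Category) (F F' : Functor C B) (U : Functor B C)
  (ad : Adjunction F U) (ad' : Adjunction F' U).

Definition th (V : C) : hom (F V) (F' V) := adj_counit ad (F' V) ∘ fmap F (adj_unit ad' V).

Lemma th_nat V W (h : hom V W) : th W ∘ fmap F h = fmap F' h ∘ th V.
Proof.
  unfold th. rewrite <- comp_assoc, <- fmap_comp, <- (adj_unit_nat ad').
  rewrite fmap_comp, comp_assoc, <- (adj_counit_nat ad), <- comp_assoc. reflexivity.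
Qed.

Lemma th_counit a : adj_counit ad' a ∘ th (U a) = adj_counit ad a.
Proof.
  unfold th. rewrite comp_assoc, (adj_counit_nat ad), <- comp_assoc, <- fmap_comp.
  rewrite (adj_triangle_U ad'), fmap_id, comp_id_r. reflexivity.
Qed.

Lemma th_unit V : fmap U (th V) ∘ adj_unit ad V = adj_unit ad' V.
Proof.
  unfold th. rewrite fmap_comp, <- comp_assoc, (adj_unit_nat ad), comp_assoc.
  rewrite (adj_triangle_U ad), comp_id_l. reflexivity.
Qed.
End TwoAdj.

Lemma transpose_uniq (C B : Category) (F : Functor C B) (U : Functor B C)
  (ad : Adjunction F U) V b (f g : hom (F V) b) :
  fmap U f ∘ adj_unit ad V = fmap U g ∘ adj_unit ad V -> f = g.
Proof.
  intros E.
  assert (K : forall h : hom (F V) b, h = adj_counit ad b ∘ fmap F (fmap U h ∘ adj_unit ad V)).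
  { intros h. rewrite fmap_comp, comp_assoc, <- (adj_counit_nat ad), <- comp_assoc.
    rewrite (adj_triangle_F ad), comp_id_r. reflexivity. }
  rewrite (K f), (K g), E. reflexivity.
Qed.

Lemma th_iso (C B : Category) (F F' : Functor C B) (U : Functor B C)
  (ad : Adjunction F U) (ad' : Adjunction F' U) V : is_iso (th ad ad' V).
Proof.
  exists (th ad' ad V). split.
  - apply transpose_uniq with (ad := ad). rewrite fmap_comp, <- comp_assoc, !th_unit, fmap_id, comp_id_l.
    reflexivity.
  - apply transpose_uniq with (ad := ad'). rewrite fmap_comp, <- comp_assoc, !th_unit, fmap_id, comp_id_l.
    reflexivity.
Qed.

Lemma cancel_r (C : Category) (a b c : C) (g : hom b a) (f : hom a b) (h : hom a c) :
  g ∘ f = idm a -> h ∘ g ∘ f = h.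
Proof. intros E. rewrite <- comp_assoc, E, comp_id_r. reflexivity. Qed.
Lemma cancel_l (C : Category) (a b c : C) (g : hom a b) (f : hom b a) (h : hom c b) :
  g ∘ f = idm b -> g ∘ (f ∘ h) = h.
Proof. intros E. rewrite comp_assoc, E, comp_id_l. reflexivity. Qed.
Ltac assoc := repeat rewrite comp_assoc.

Lemma fmap_comp_eq (C D : Category) (F : Functor C D) a b c (g : hom b c) (f : hom a b) (h : hom a c) :
  g ∘ f = h -> fmap F g ∘ fmap F f = fmap F h.
Proof. intros <-. symmetry. apply fmap_comp. Qed.

Lemma assoc_rw (C : Category) (x y y' z : C) (a : hom y z) (b : hom x y) (c : hom y' z) (d : hom x y') :
  a ∘ b = c ∘ d -> forall (t : C) (h : hom z t), h ∘ a ∘ b = h ∘ c ∘ d.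
Proof. intros E t h. rewrite <- !comp_assoc, E. reflexivity. Qed.

Lemma iso_comp (C : Category) (a b c : C) (f : hom a b) (g : hom b c) :
  is_iso f -> is_iso g -> is_iso (g ∘ f).
Proof.
  intros [f' [F1 F2]] [g' [G1 G2]]. exists (f' ∘ g'). split.
  - rewrite <- comp_assoc, (comp_assoc g' g f), G1, comp_id_l. exact F1.
  - rewrite <- comp_assoc, (comp_assoc f f' g'), F2, comp_id_l. exact G2.
Qed.

Section Prod.
Variable L : FinLimCat.
Definition prod (a b : L) : L := pb_ob (pullback (term_hom a) (term_hom b)).
Definition pr1 (a b : L) : hom (prod a b) a := pb_p1 _.
Definition pr2 (a b : L) : hom (prod a b) b := pb_p2 _.
Lemma tcomm (a b w : L) (u : hom w a) (v : hom w b) : term_hom a ∘ u = term_hom b ∘ v.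
Proof. apply term_uniq. Qed.
Definition tpair (a b w : L) (u : hom w a) (v : hom w b) : hom w (prod a b) :=
  pb_pair _ u v (tcomm u v).
Lemma pr1_tpair (a b w : L) (u : hom w a) (v : hom w b) : pr1 a b ∘ tpair u v = u.
Proof. apply pb_pair_p1. Qed.
Lemma pr2_tpair (a b w : L) (u : hom w a) (v : hom w b) : pr2 a b ∘ tpair u v = v.
Proof. apply pb_pair_p2. Qed.
Lemma prod_ext (a b w : L) (u v : hom w (prod a b)) :
  pr1 a b ∘ u = pr1 a b ∘ v -> pr2 a b ∘ u = pr2 a b ∘ v -> u = v.
Proof. apply pb_uniq. Qed.
Lemma tpair_comp (a b w w' : L) (u : hom w a) (v : hom w b) (k : hom w' w) :
  tpair u v ∘ k = tpair (u ∘ k) (v ∘ k).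
Proof. apply pb_pair_comp; reflexivity. Qed.
Lemma tpair_eta (a b w : L) (u : hom w (prod a b)) : tpair (pr1 a b ∘ u) (pr2 a b ∘ u) = u.
Proof. apply prod_ext; rewrite ?pr1_tpair, ?pr2_tpair; reflexivity. Qed.
Lemma tpair_ext (a b w : L) (u u' : hom w a) (v v' : hom w b) :
  u = u' -> v = v' -> tpair u v = tpair u' v'.
Proof. intros -> ->. reflexivity. Qed.
End Prod.
Arguments pr1 {L a b}.
Arguments pr2 {L a b}.

Ltac psimp := repeat progress (rewrite <- ?comp_assoc;
  rewrite ?tpair_comp, ?pr1_tpair, ?pr2_tpair, ?comp_id_l, ?comp_id_r).

Section Lift.
Variables (A P : FinLimCat) (D : Functor A P) (S : A).
Hypothesis HDS : IsEquivalence (sliced_functor D S).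

Lemma D_faithful (V W : A) (v : hom V S) (w : hom W S) (h k : hom V W) :
  w ∘ h = v -> w ∘ k = v -> fmap D h = fmap D k -> h = k.
Proof.
  intros Hh Hk E.
  pose (hh := exist (fun h0 => w ∘ h0 = v) h Hh : @hom (Slice S) (existT _ V v) (existT _ W w)).
  pose (kk := exist (fun h0 => w ∘ h0 = v) k Hk : @hom (Slice S) (existT _ V v) (existT _ W w)).
  assert (E2 : hh = kk).
  { apply (eqv_faithful HDS). apply sl_hom_eq. simpl. exact E. }
  exact (f_equal (@proj1_sig _ _) E2).
Qed.

Lemma D_full (V W : A) (v : hom V S) (w : hom W S) (m : hom (D V) (D W)) :
  fmap D w ∘ m = fmap D v -> exists h, w ∘ h = v /\ fmap D h = m.
Proof.
  intros Hm.
  pose (mm := exist _ m Hm : @hom (Slice (D S)) (sliced_functor D S (existT _ V v))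
                                   (sliced_functor D S (existT _ W w))).
  destruct (eqv_full HDS mm) as [hh Ehh].
  exists (proj1_sig hh). split; [exact (proj2_sig hh) |].
  exact (f_equal (@proj1_sig _ _) Ehh).
Qed.

Lemma D_es (Z : P) (z : hom Z (D S)) :
  exists (V : A) (v : hom V S) (j : hom (D V) Z), z ∘ j = fmap D v /\ is_iso j.
Proof.
  destruct (eqv_es HDS (existT _ Z z)) as [[V v] [j [k [Hk1 Hk2]]]].
  exists V, v, (proj1_sig j). split.
  - exact (proj2_sig j).
  - exists (proj1_sig k). split.
    + exact (f_equal (@proj1_sig _ _) Hk1).
    + exact (f_equal (@proj1_sig _ _) Hk2).
Qed.

Section PBP.
Variables (X Y : A) (f : hom X S) (g : hom Y S).

Lemma cmap_comm : fmap D f ∘ fmap D (pb_p1 (pullback f g)) = fmap D g ∘ fmap D (pb_p2 (pullback f g)).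
Proof. rewrite <- !fmap_comp, pb_comm. reflexivity. Qed.

Definition cmap : hom (D (pb_ob (pullback f g))) (pb_ob (pullback (fmap D f) (fmap D g))) :=
  pb_pair _ _ _ cmap_comm.

Lemma cmap_iso : is_iso cmap.
Proof.
  set (PQ := pullback (fmap D f) (fmap D g)).
  destruct (D_es (fmap D f ∘ pb_p1 PQ)) as (V & v & j & Hj & Ij).
  destruct (D_full (v := v) (w := f) (m := pb_p1 PQ ∘ j)) as (a' & Ha'1 & Ha'2).
  { rewrite comp_assoc. exact Hj. }
  destruct (D_full (v := v) (w := g) (m := pb_p2 PQ ∘ j)) as (b' & Hb'1 & Hb'2).
  { rewrite comp_assoc, <- (pb_comm PQ). exact Hj. }
  assert (Hab : f ∘ a' = g ∘ b') by (rewrite Ha'1, Hb'1; reflexivity).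
  destruct Ij as [ji [Hji1 Hji2]].
  exists (fmap D (pb_pair (pullback f g) a' b' Hab) ∘ ji). split.
  - destruct (D_full (v := f ∘ pb_p1 (pullback f g)) (w := v) (m := ji ∘ cmap)) as (u & Hu1 & Hu2).
    { rewrite fmap_comp, <- Hj. assoc. rewrite (cancel_r _ Hji2).
      unfold cmap. rewrite <- comp_assoc, pb_pair_p1. reflexivity. }
    rewrite <- comp_assoc, <- Hu2, <- fmap_comp, <- fmap_id. f_equal.
    apply pb_uniq.
    + rewrite comp_assoc, pb_pair_p1, comp_id_r.
      apply (D_faithful (v := f ∘ pb_p1 (pullback f g)) (w := f)).
      * rewrite comp_assoc, Ha'1, Hu1. reflexivity.
      * reflexivity.
      * rewrite fmap_comp, Ha'2, Hu2. assoc. rewrite (cancel_r _ Hji2).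
        unfold cmap. rewrite pb_pair_p1. reflexivity.
    + rewrite comp_assoc, pb_pair_p2, comp_id_r.
      apply (D_faithful (v := f ∘ pb_p1 (pullback f g)) (w := g)).
      * rewrite comp_assoc, Hb'1, Hu1. reflexivity.
      * apply eq_sym, pb_comm.
      * rewrite fmap_comp, Hb'2, Hu2. assoc. rewrite (cancel_r _ Hji2).
        unfold cmap. rewrite pb_pair_p2. reflexivity.
  - apply pb_uniq.
    + unfold cmap. assoc. rewrite pb_pair_p1, <- fmap_comp, pb_pair_p1, Ha'2.
      rewrite (cancel_r _ Hji2), comp_id_r. reflexivity.
    + unfold cmap. assoc. rewrite pb_pair_p2, <- fmap_comp, pb_pair_p2, Hb'2.
      rewrite (cancel_r _ Hji2), comp_id_r. reflexivity.
Qed.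



Definition cinv : hom (pb_ob (pullback (fmap D f) (fmap D g))) (D (pb_ob (pullback f g))) :=
  proj1_sig (constructive_indefinite_description _ cmap_iso).
Lemma cinv_spec : cinv ∘ cmap = idm _ /\ cmap ∘ cinv = idm _.
Proof. exact (proj2_sig (constructive_indefinite_description _ cmap_iso)). Qed.

Lemma cinv_Dj (W : P) (V : A) (a : hom W (D X)) (b : hom W (D Y)) H (j : hom (D V) W)
  (α : hom V X) (β : hom V Y) (H' : f ∘ α = g ∘ β) :
  a ∘ j = fmap D α -> b ∘ j = fmap D β ->
  cinv ∘ pb_pair (pullback (fmap D f) (fmap D g)) a b H ∘ j = fmap D (pb_pair (pullback f g) α β H').
Proof.
  intros Ea Eb.
  assert (E : pb_pair (pullback (fmap D f) (fmap D g)) a b H ∘ j = cmap ∘ fmap D (pb_pair (pullback f g) α β H')).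
  { apply pb_uniq; unfold cmap; assoc.
    - rewrite !pb_pair_p1, <- fmap_comp, pb_pair_p1. exact Ea.
    - rewrite !pb_pair_p2, <- fmap_comp, pb_pair_p2. exact Eb. }
  rewrite <- comp_assoc, E, (cancel_l _ (proj1 cinv_spec)). reflexivity.
Qed.

Lemma cinv_p1 : fmap D (pb_p1 (pullback f g)) ∘ cinv = pb_p1 (pullback (fmap D f) (fmap D g)).
Proof.
  assert (E : pb_p1 (pullback (fmap D f) (fmap D g)) ∘ cmap = fmap D (pb_p1 (pullback f g))) by apply pb_pair_p1.
  rewrite <- E, <- comp_assoc, (proj2 cinv_spec), comp_id_r. reflexivity.
Qed.
Lemma cinv_p2 : fmap D (pb_p2 (pullback f g)) ∘ cinv = pb_p2 (pullback (fmap D f) (fmap D g)).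
Proof.
  assert (E : pb_p2 (pullback (fmap D f) (fmap D g)) ∘ cmap = fmap D (pb_p2 (pullback f g))) by apply pb_pair_p2.
  rewrite <- E, <- comp_assoc, (proj2 cinv_spec), comp_id_r. reflexivity.
Qed.
End PBP.
End Lift.

Section Grpd.
Variables (A P : FinLimCat) (D : Functor A P) (S : A).
Hypothesis HDS : IsEquivalence (sliced_functor D S).

Local Notation S2 := (prod S S).
Definition m13 : hom (pb_ob (pullback (@pr2 _ S S) (@pr1 _ S S))) S2 :=
  tpair (pr1 ∘ pb_p1 _) (pr2 ∘ pb_p2 _).

Lemma m13_pair V (α β : hom V S2) H : m13 ∘ pb_pair _ α β H = tpair (pr1 ∘ α) (pr2 ∘ β).
Proof.
  unfold m13. rewrite tpair_comp. apply tpair_ext.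
  - rewrite <- comp_assoc, pb_pair_p1. reflexivity.
  - rewrite <- comp_assoc, pb_pair_p2. reflexivity.
Qed.

Definition Gcomp := fmap D m13 ∘ cinv HDS (@pr2 _ S S) (@pr1 _ S S).

Lemma gcomp_Dj (W : P) (V : A) (a b : hom W (D S2)) H (j : hom (D V) W)
  (α β : hom V S2) (H' : pr2 ∘ α = pr1 ∘ β) :
  a ∘ j = fmap D α -> b ∘ j = fmap D β ->
  Gcomp ∘ pb_pair (pullback (fmap D pr2) (fmap D pr1)) a b H ∘ j = fmap D (tpair (pr1 ∘ α) (pr2 ∘ β)).
Proof.
  intros Ea Eb. rewrite <- (m13_pair H'), fmap_comp. unfold Gcomp.
  rewrite <- (cinv_Dj HDS H H' Ea Eb). assoc. reflexivity.
Qed.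


Local Notation PB2 := (pullback (fmap D (@pr2 _ S S)) (fmap D (@pr1 _ S S))).
Definition Gid : hom (D S) (D S2) := fmap D (tpair (idm S) (idm S)).
Definition GInvm : hom (D S2) (D S2) := fmap D (tpair pr2 pr1).

Lemma G_src_id : fmap D pr2 ∘ Gid = idm (D S).
Proof. unfold Gid. rewrite <- fmap_comp, pr2_tpair, fmap_id. reflexivity. Qed.
Lemma G_tgt_id : fmap D pr1 ∘ Gid = idm (D S).
Proof. unfold Gid. rewrite <- fmap_comp, pr1_tpair, fmap_id. reflexivity. Qed.
Lemma G_src_comp : fmap D pr2 ∘ Gcomp = fmap D pr2 ∘ pb_p2 PB2.
Proof.
  unfold Gcomp, m13. rewrite comp_assoc, <- fmap_comp, pr2_tpair, fmap_comp, <- comp_assoc.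
  rewrite cinv_p2. reflexivity.
Qed.
Lemma G_tgt_comp : fmap D pr1 ∘ Gcomp = fmap D pr1 ∘ pb_p1 PB2.
Proof.
  unfold Gcomp, m13. rewrite comp_assoc, <- fmap_comp, pr1_tpair, fmap_comp, <- comp_assoc.
  rewrite cinv_p1. reflexivity.
Qed.
Lemma G_src_inv : fmap D pr2 ∘ GInvm = fmap D pr1.
Proof. unfold GInvm. rewrite <- fmap_comp, pr2_tpair. reflexivity. Qed.
Lemma G_tgt_inv : fmap D pr1 ∘ GInvm = fmap D pr2.
Proof. unfold GInvm. rewrite <- fmap_comp, pr1_tpair. reflexivity. Qed.

Lemma G_id_l W (f : hom W (D S2)) (H : fmap D pr2 ∘ (Gid ∘ (fmap D pr1 ∘ f)) = fmap D pr1 ∘ f) :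
  Gcomp ∘ pb_pair PB2 (Gid ∘ (fmap D pr1 ∘ f)) f H = f.
Proof.
  destruct (D_es HDS (fmap D pr1 ∘ f)) as (V & v & j & Hj & Ij).
  destruct (D_full HDS (v := v) (w := pr1) (m := f ∘ j)) as (f' & Hf1 & Hf2).
  { rewrite comp_assoc. exact Hj. }
  apply (iso_epi Ij).
  assert (H' : pr2 ∘ (tpair (idm S) (idm S) ∘ (pr1 ∘ f')) = pr1 ∘ f') by (psimp; reflexivity).
  rewrite (gcomp_Dj H H').
  - rewrite <- Hf2. f_equal. psimp. apply prod_ext; psimp; reflexivity.
  - unfold Gid. rewrite <- comp_assoc, <- comp_assoc, <- Hf2, <- !fmap_comp. reflexivity.
  - auto.
Qed.

Lemma G_id_r W (g : hom W (D S2)) (H : fmap D pr2 ∘ g = fmap D pr1 ∘ (Gid ∘ (fmap D pr2 ∘ g))) :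
  Gcomp ∘ pb_pair PB2 g (Gid ∘ (fmap D pr2 ∘ g)) H = g.
Proof.
  destruct (D_es HDS (fmap D pr1 ∘ g)) as (V & v & j & Hj & Ij).
  destruct (D_full HDS (v := v) (w := pr1) (m := g ∘ j)) as (g' & Hg1 & Hg2).
  { rewrite comp_assoc. exact Hj. }
  apply (iso_epi Ij).
  assert (H' : pr2 ∘ g' = pr1 ∘ (tpair (idm S) (idm S) ∘ (pr2 ∘ g'))) by (psimp; reflexivity).
  rewrite (gcomp_Dj H H').
  - rewrite <- Hg2. f_equal. psimp. apply prod_ext; psimp; reflexivity.
  - auto.
  - unfold Gid. rewrite <- comp_assoc, <- comp_assoc, <- Hg2, <- !fmap_comp. reflexivity.
Qed.

Lemma G_inv_l W (g : hom W (D S2)) (H : fmap D pr2 ∘ (GInvm ∘ g) = fmap D pr1 ∘ g) :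
  Gcomp ∘ pb_pair PB2 (GInvm ∘ g) g H = Gid ∘ (fmap D pr2 ∘ g).
Proof.
  destruct (D_es HDS (fmap D pr1 ∘ g)) as (V & v & j & Hj & Ij).
  destruct (D_full HDS (v := v) (w := pr1) (m := g ∘ j)) as (g' & Hg1 & Hg2).
  { rewrite comp_assoc. exact Hj. }
  apply (iso_epi Ij).
  assert (H' : pr2 ∘ (tpair pr2 pr1 ∘ g') = pr1 ∘ g') by (psimp; reflexivity).
  rewrite (gcomp_Dj H H').
  - unfold Gid. rewrite <- !comp_assoc, <- Hg2, <- !fmap_comp. f_equal.
    psimp. reflexivity.
  - unfold GInvm. rewrite <- comp_assoc, <- Hg2, <- !fmap_comp. reflexivity.
  - auto.
Qed.

Lemma G_inv_r W (g : hom W (D S2)) (H : fmap D pr2 ∘ g = fmap D pr1 ∘ (GInvm ∘ g)) :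
  Gcomp ∘ pb_pair PB2 g (GInvm ∘ g) H = Gid ∘ (fmap D pr1 ∘ g).
Proof.
  destruct (D_es HDS (fmap D pr1 ∘ g)) as (V & v & j & Hj & Ij).
  destruct (D_full HDS (v := v) (w := pr1) (m := g ∘ j)) as (g' & Hg1 & Hg2).
  { rewrite comp_assoc. exact Hj. }
  apply (iso_epi Ij).
  assert (H' : pr2 ∘ g' = pr1 ∘ (tpair pr2 pr1 ∘ g')) by (psimp; reflexivity).
  rewrite (gcomp_Dj H H').
  - unfold Gid. rewrite <- !comp_assoc, <- Hg2, <- !fmap_comp. f_equal.
    psimp. reflexivity.
  - auto.
  - unfold GInvm. rewrite <- comp_assoc, <- Hg2, <- !fmap_comp. reflexivity.
Qed.

Lemma G_assoc W (h g f : hom W (D S2))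
  (H1 : fmap D pr2 ∘ h = fmap D pr1 ∘ g) (H2 : fmap D pr2 ∘ g = fmap D pr1 ∘ f)
  (H3 : fmap D pr2 ∘ (Gcomp ∘ pb_pair PB2 h g H1) = fmap D pr1 ∘ f)
  (H4 : fmap D pr2 ∘ h = fmap D pr1 ∘ (Gcomp ∘ pb_pair PB2 g f H2)) :
  Gcomp ∘ pb_pair PB2 (Gcomp ∘ pb_pair PB2 h g H1) f H3 =
  Gcomp ∘ pb_pair PB2 h (Gcomp ∘ pb_pair PB2 g f H2) H4.
Proof.
  destruct (D_es HDS (fmap D pr1 ∘ h)) as (V & v & j & Hj & Ij).
  destruct (D_full HDS (v := v) (w := pr1) (m := h ∘ j)) as (h' & Hh1 & Hh2).
  { rewrite comp_assoc. exact Hj. }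
  destruct (D_full HDS (v := pr2 ∘ h') (w := pr1) (m := g ∘ j)) as (g' & Hg1 & Hg2).
  { rewrite comp_assoc, <- H1, <- comp_assoc, <- Hh2, fmap_comp. reflexivity. }
  destruct (D_full HDS (v := pr2 ∘ g') (w := pr1) (m := f ∘ j)) as (f' & Hf1 & Hf2).
  { rewrite comp_assoc, <- H2, <- comp_assoc, <- Hg2, fmap_comp. reflexivity. }
  apply (iso_epi Ij).
  assert (K1 : pr2 ∘ h' = pr1 ∘ g') by auto.
  assert (K2 : pr2 ∘ g' = pr1 ∘ f') by auto.
  assert (K3 : pr2 ∘ tpair (pr1 ∘ h') (pr2 ∘ g') = pr1 ∘ f') by (psimp; auto).
  assert (K4 : pr2 ∘ h' = pr1 ∘ tpair (pr1 ∘ g') (pr2 ∘ f')) by (psimp; auto).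
  rewrite (gcomp_Dj H3 K3), (gcomp_Dj H4 K4).
  - f_equal. psimp. reflexivity.
  - auto.
  - apply (gcomp_Dj H2 K2); auto.
  - apply (gcomp_Dj H1 K1); auto.
  - auto.
Qed.

Definition TheG : InternalGroupoid P :=
  {| g0 := D S; g1 := D S2; gsrc := fmap D pr2; gtgt := fmap D pr1; gid := Gid;
     gcomp := Gcomp; ginv := GInvm;
     gsrc_id := G_src_id; gtgt_id := G_tgt_id; gsrc_comp := G_src_comp; gtgt_comp := G_tgt_comp;
     gcomp_id_l := G_id_l; gcomp_id_r := G_id_r; gcomp_assoc := G_assoc;
     gsrc_inv := G_src_inv; gtgt_inv := G_tgt_inv; ginv_l := G_inv_l; ginv_r := G_inv_r |}.
End Grpd.

Section Phi.
Variables (A P : FinLimCat) (D : Functor A P) (S : A).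
Hypothesis HDS : IsEquivalence (sliced_functor D S).
Local Notation S2 := (prod S S).
Local Notation G := (TheG HDS).

Section Obj.
Variable a : A.
Local Notation Sa := (prod S a).
Local Notation PBa := (pullback (fmap D (@pr2 _ S S)) (fmap D (@pr1 _ S a))).

Definition ma : hom (pb_ob (pullback (@pr2 _ S S) (@pr1 _ S a))) Sa :=
  tpair (pr1 ∘ pb_p1 _) (pr2 ∘ pb_p2 _).

Lemma ma_pair V (α : hom V S2) (β : hom V Sa) H : ma ∘ pb_pair _ α β H = tpair (pr1 ∘ α) (pr2 ∘ β).
Proof.
  unfold ma. rewrite tpair_comp. apply tpair_ext.
  - rewrite <- comp_assoc, pb_pair_p1. reflexivity.
  - rewrite <- comp_assoc, pb_pair_p2. reflexivity.
Qed.

Definition Act := fmap D ma ∘ cinv HDS (@pr2 _ S S) (@pr1 _ S a).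

Lemma act_Dj (W : P) (V : A) (g : hom W (D S2)) (x : hom W (D Sa)) H (j : hom (D V) W)
  (α : hom V S2) (β : hom V Sa) (H' : pr2 ∘ α = pr1 ∘ β) :
  g ∘ j = fmap D α -> x ∘ j = fmap D β ->
  Act ∘ pb_pair PBa g x H ∘ j = fmap D (tpair (pr1 ∘ α) (pr2 ∘ β)).
Proof.
  intros Ea Eb. rewrite <- (ma_pair H'), fmap_comp. unfold Act.
  rewrite <- (cinv_Dj HDS H H' Ea Eb). assoc. reflexivity.
Qed.

Lemma act_anchor : fmap D pr1 ∘ Act = fmap D pr1 ∘ pb_p1 PBa.
Proof.
  unfold Act, ma. rewrite comp_assoc, <- fmap_comp, pr1_tpair, fmap_comp, <- comp_assoc.
  rewrite cinv_p1. reflexivity.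
Qed.

Lemma act_unit W (x : hom W (D Sa))
  (H : fmap D pr2 ∘ (Gid D S ∘ (fmap D pr1 ∘ x)) = fmap D pr1 ∘ x) :
  Act ∘ pb_pair PBa (Gid D S ∘ (fmap D pr1 ∘ x)) x H = x.
Proof.
  destruct (D_es HDS (fmap D pr1 ∘ x)) as (V & v & j & Hj & Ij).
  destruct (D_full HDS (v := v) (w := pr1) (m := x ∘ j)) as (x' & Hx1 & Hx2).
  { rewrite comp_assoc. exact Hj. }
  apply (iso_epi Ij).
  assert (H' : pr2 ∘ (tpair (idm S) (idm S) ∘ (pr1 ∘ x')) = pr1 ∘ x') by (psimp; reflexivity).
  rewrite (act_Dj H H').
  - rewrite <- Hx2. f_equal. psimp. apply prod_ext; psimp; reflexivity.
  - unfold Gid. rewrite <- comp_assoc, <- comp_assoc, <- Hx2, <- !fmap_comp. reflexivity.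
  - auto.
Qed.

Local Notation PB2 := (pullback (fmap D (@pr2 _ S S)) (fmap D (@pr1 _ S S))).

Lemma act_assoc W (g f : hom W (D S2)) (x : hom W (D Sa))
  (H1 : fmap D pr2 ∘ g = fmap D pr1 ∘ f) (H2 : fmap D pr2 ∘ f = fmap D pr1 ∘ x)
  (H3 : fmap D pr2 ∘ (Gcomp HDS ∘ pb_pair PB2 g f H1) = fmap D pr1 ∘ x)
  (H4 : fmap D pr2 ∘ g = fmap D pr1 ∘ (Act ∘ pb_pair PBa f x H2)) :
  Act ∘ pb_pair PBa (Gcomp HDS ∘ pb_pair PB2 g f H1) x H3 =
  Act ∘ pb_pair PBa g (Act ∘ pb_pair PBa f x H2) H4.
Proof.
  destruct (D_es HDS (fmap D pr1 ∘ g)) as (V & v & j & Hj & Ij).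
  destruct (D_full HDS (v := v) (w := pr1) (m := g ∘ j)) as (g' & Hg1 & Hg2).
  { rewrite comp_assoc. exact Hj. }
  destruct (D_full HDS (v := pr2 ∘ g') (w := pr1) (m := f ∘ j)) as (f' & Hf1 & Hf2).
  { rewrite comp_assoc, <- H1, <- comp_assoc, <- Hg2, fmap_comp. reflexivity. }
  destruct (D_full HDS (v := pr2 ∘ f') (w := pr1) (m := x ∘ j)) as (x' & Hx1 & Hx2).
  { rewrite comp_assoc, <- H2, <- comp_assoc, <- Hf2, fmap_comp. reflexivity. }
  apply (iso_epi Ij).
  assert (K1 : pr2 ∘ g' = pr1 ∘ f') by auto.
  assert (K2 : pr2 ∘ f' = pr1 ∘ x') by auto.
  assert (K3 : pr2 ∘ tpair (pr1 ∘ g') (pr2 ∘ f') = pr1 ∘ x') by (psimp; auto).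
  assert (K4 : pr2 ∘ g' = pr1 ∘ tpair (pr1 ∘ f') (pr2 ∘ x')) by (psimp; auto).
  rewrite (act_Dj H3 K3), (act_Dj H4 K4).
  - f_equal. psimp. reflexivity.
  - auto.
  - apply (act_Dj H2 K2); auto.
  - apply (gcomp_Dj HDS H1 K1); auto.
  - auto.
Qed.

Definition PhiObj : gobj G :=
  @Build_gobj P G (D Sa) (fmap D (@pr1 _ S a)) Act act_anchor act_unit act_assoc.
End Obj.


Definition times (a b : A) (f : hom a b) : hom (prod S a) (prod S b) := tpair pr1 (f ∘ pr2).

Lemma times_eqv (a b : A) (f : hom a b) : @is_equivariant _ G (PhiObj a) (PhiObj b) (fmap D (times f)).
Proof.
  split.
  - simpl. unfold times. rewrite <- fmap_comp, pr1_tpair. reflexivity.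
  - intros W g x H H'. simpl in *.
    destruct (D_es HDS (fmap D pr1 ∘ g)) as (V & v & j & Hj & Ij).
    destruct (D_full HDS (v := v) (w := pr1) (m := g ∘ j)) as (g' & Hg1 & Hg2).
    { rewrite comp_assoc. exact Hj. }
    destruct (D_full HDS (v := pr2 ∘ g') (w := pr1) (m := x ∘ j)) as (x' & Hx1 & Hx2).
    { rewrite comp_assoc, <- H, <- comp_assoc, <- Hg2, fmap_comp. reflexivity. }
    apply (iso_epi Ij).
    assert (K1 : pr2 ∘ g' = pr1 ∘ x') by auto.
    assert (K2 : pr2 ∘ g' = pr1 ∘ (times f ∘ x')) by (unfold times; psimp; auto).
    rewrite <- comp_assoc, (act_Dj H K1), (act_Dj H' K2).
    + rewrite <- fmap_comp. f_equal. unfold times. psimp. reflexivity.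
    + auto.
    + rewrite <- comp_assoc, <- Hx2, <- fmap_comp. reflexivity.
    + auto.
    + auto.
Qed.

Lemma times_id (a : A) : times (idm a) = idm _.
Proof. unfold times. apply prod_ext; psimp; reflexivity. Qed.
Lemma times_comp (a b c : A) (g : hom b c) (f : hom a b) : times (g ∘ f) = times g ∘ times f.
Proof. unfold times. apply prod_ext; psimp; reflexivity. Qed.

Definition PhiMap (a b : A) (f : hom a b) : gobj_hom (PhiObj a) (PhiObj b) :=
  exist _ (fmap D (times f)) (times_eqv f).

Definition Phi : Functor A (GObjCat G).
Proof.
  refine (@Build_Functor A (GObjCat G) PhiObj PhiMap _ _).
  - intros a. apply gobj_hom_eq. simpl. rewrite times_id. apply fmap_id.
  - intros a b c g f. apply gobj_hom_eq. simpl. rewrite times_comp. apply fmap_comp.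
Defined.
End Phi.

Section Sigma.
Variables (A : FinLimCat) (S : A).
Local Notation U := (pullback_functor (term_hom S)).

Definition Sg_obj (V : Slice S) : Slice (@term A) := existT _ (projT1 V) (term_hom _).
Definition Sg_map (V W : Slice S) (h : hom V W) : hom (Sg_obj V) (Sg_obj W) :=
  exist _ (proj1_sig h) (term_uniq _ _).

Definition Sg : Functor (Slice S) (Slice (@term A)).
Proof.
  refine (@Build_Functor (Slice S) (Slice (@term A)) Sg_obj Sg_map _ _).
  - intros. apply sl_hom_eq. reflexivity.
  - intros. apply sl_hom_eq. reflexivity.
Defined.

Definition sg_unit (V : Slice S) : hom V (U (Sg V)) :=
  exist _ (pb_pair (pullback (term_hom S) (term_hom (projT1 V))) (projT2 V) (idm _) (term_uniq _ _))
    (pb_pair_p1 _ _ _ _).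

Lemma sg_counit_proof (b : Slice (@term A)) :
  projT2 b ∘ pb_p2 (pullback (term_hom S) (projT2 b)) = term_hom _.
Proof. apply term_uniq. Qed.

Definition sg_counit (b : Slice (@term A)) : hom (Sg (U b)) b :=
  exist _ (pb_p2 (pullback (term_hom S) (projT2 b))) (sg_counit_proof b).

Definition SgAdj : Adjunction Sg U.
Proof.
  refine (@Build_Adjunction _ _ Sg U sg_unit sg_counit _ _ _ _).
  - intros V W f. apply sl_hom_eq. simpl. unfold Sg_obj; simpl. apply pb_uniq.
    + rewrite !comp_assoc, !pb_pair_p1. exact (eq_sym (proj2_sig f)).
    + rewrite !comp_assoc, !pb_pair_p2. rewrite <- comp_assoc, pb_pair_p2, comp_id_r, comp_id_l.
      reflexivity.
  - intros b b' g. apply sl_hom_eq. simpl. rewrite pb_pair_p2. reflexivity.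
  - intros V. apply sl_hom_eq. simpl. apply pb_pair_p2.
  - intros b. apply sl_hom_eq. simpl. apply pb_uniq.
    + rewrite comp_id_r, !comp_assoc, !pb_pair_p1. reflexivity.
    + rewrite comp_id_r, !comp_assoc, !pb_pair_p2. rewrite <- comp_assoc, pb_pair_p2, comp_id_r.
      reflexivity.
Defined.
End Sigma.

Lemma fmap_iso (C D : Category) (F : Functor C D) a b (f : hom a b) : is_iso f -> is_iso (fmap F f).
Proof.
  intros [g [E1 E2]]. exists (fmap F g). rewrite <- !fmap_comp, E1, E2, !fmap_id. auto.
Qed.

Lemma eqv_iso (P : FinLimCat) (G : InternalGroupoid P) (x y : gobj G) (k : gobj_hom x y) :
  is_iso (proj1_sig k) -> @is_iso (GObjCat G) x y k.
Proof.
  destruct k as [k [Ka Kq]]. simpl. intros [k' [E1 E2]].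
  assert (Q : @is_equivariant _ G y x k').
  { split.
    - rewrite <- Ka, <- comp_assoc, E2, comp_id_r. reflexivity.
    - intros W g z H H'. apply (iso_mono (f := k' ∘ _) (ex_intro _ k' (conj E1 E2))).
      rewrite comp_assoc, E2, comp_id_l.
      assert (H'' : gsrc G ∘ g = go_anchor y ∘ (k ∘ (k' ∘ z))).
      { rewrite comp_assoc, Ka. exact H'. }
      rewrite (Kq W g (k' ∘ z) H' H''). apply f_equal, pb_pair_ext; auto.
      rewrite comp_assoc, E2, comp_id_l. reflexivity. }
  exists (exist _ k' Q). split; apply gobj_hom_eq; simpl; auto.
Qed.

Section Final.
Variables (A P : FinLimCat) (D : Functor A P) (S : A).
Hypothesis HDS : IsEquivalence (sliced_functor D S).
Local Notation U := (pullback_functor (term_hom S)).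
Variables (F : Functor (Slice S) (Slice (@term A))) (adjF : Adjunction F U).
Hypothesis HK : IsEquivalence (comparison adjF).
Local Notation S2 := (prod S S).
Local Notation G := (TheG HDS).
Local Notation Sg := (Sg S).
Local Notation th := (th adjF (SgAdj S)).

Definition objA (a : A) : Slice (@term A) := existT _ a (term_hom a).

Lemma U_times (a b : A) (h : hom (objA a) (objA b)) : proj1_sig (fmap U h) = times S (proj1_sig h).
Proof. apply pb_pair_ext; reflexivity. Qed.

Lemma U_delta (a : A) : proj1_sig (fmap U (sg_counit S (objA a))) = times S (@pr2 _ S a).
Proof. apply pb_pair_ext; reflexivity. Qed.


Lemma U_Sg (a : A) (W : Slice S) (hh : hom (U (objA a)) W) :
  proj1_sig (fmap U (fmap Sg hh)) = times S (proj1_sig hh).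
Proof. apply pb_pair_ext; reflexivity. Qed.

Lemma times_pr1 (a b : A) (f : hom a b) : pr1 ∘ times S f = pr1.
Proof. unfold times. apply pr1_tpair. Qed.

Lemma Phi_faithful (a b : A) (f g : hom a b) : fmap (Phi HDS) f = fmap (Phi HDS) g -> f = g.
Proof.
  intros E. apply (f_equal (@proj1_sig _ _)) in E. simpl in E.
  apply (D_faithful HDS (v := pr1) (w := pr1)) in E; try apply times_pr1.
  pose (f' := exist (fun h => term_hom b ∘ h = term_hom a) f (term_uniq _ _) : hom (objA a) (objA b)).
  pose (g' := exist (fun h => term_hom b ∘ h = term_hom a) g (term_uniq _ _) : hom (objA a) (objA b)).
  assert (E' : f' = g').
  { apply (eqv_faithful HK). apply em_hom_eq. simpl. apply sl_hom_eq.
    exact (eq_trans (U_times f') (eq_trans E (eq_sym (U_times g')))). }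
  exact (f_equal (@proj1_sig _ _) E').
Qed.

Lemma act_D0 (a : A) (V : A) (g : hom (D V) (D S2)) (x : hom (D V) (D (prod S a))) H
  (α : hom V S2) (β : hom V (prod S a)) (H' : pr2 ∘ α = pr1 ∘ β) :
  g = fmap D α -> x = fmap D β ->
  Act HDS a ∘ pb_pair (pullback (fmap D pr2) (fmap D pr1)) g x H = fmap D (tpair (pr1 ∘ α) (pr2 ∘ β)).
Proof.
  intros E1 E2. rewrite <- (act_Dj HDS H (j := idm _) H').
  - rewrite comp_id_r. reflexivity.
  - rewrite comp_id_r. exact E1.
  - rewrite comp_id_r. exact E2.
Qed.

Lemma gcomp_D0 (V : A) (g f : hom (D V) (D S2)) H
  (α β : hom V S2) (H' : pr2 ∘ α = pr1 ∘ β) :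
  g = fmap D α -> f = fmap D β ->
  Gcomp HDS ∘ pb_pair (pullback (fmap D pr2) (fmap D pr1)) g f H = fmap D (tpair (pr1 ∘ α) (pr2 ∘ β)).
Proof.
  intros E1 E2. rewrite <- (gcomp_Dj HDS H (j := idm _) H').
  - rewrite comp_id_r. reflexivity.
  - rewrite comp_id_r. exact E1.
  - rewrite comp_id_r. exact E2.
Qed.

Lemma alg_from_delta (a b : A) (hh : hom (U (objA a)) (U (objA b))) :
  hh ∘ fmap U (sg_counit S (objA a)) = fmap U (sg_counit S (objA b)) ∘ fmap U (fmap Sg hh) ->
  hh ∘ fmap U (adj_counit adjF (objA a)) = fmap U (adj_counit adjF (objA b)) ∘ fmap U (fmap F hh).
Proof.
  intros E.
  rewrite <- (th_counit adjF (SgAdj S) (objA a)), <- (th_counit adjF (SgAdj S) (objA b)).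
  rewrite !fmap_comp. simpl adj_counit. rewrite comp_assoc, E, <- !comp_assoc. f_equal.
  rewrite <- !fmap_comp. f_equal. apply eq_sym, th_nat.
Qed.

Lemma Phi_full (a b : A) (k : hom (Phi HDS a) (Phi HDS b)) : exists f, fmap (Phi HDS) f = k.
Proof.
  destruct k as [k [Ka Kq]]. change (hom (D (prod S a)) (D (prod S b))) in k.
  change (fmap D (@pr1 _ S b) ∘ k = fmap D (@pr1 _ S a)) in Ka.
  destruct (D_full HDS (v := @pr1 _ S a) (w := @pr1 _ S b) (m := k) Ka) as (h & Hh1 & Hh2).
  pose (hh := exist _ h Hh1 : hom (U (objA a)) (U (objA b))).
  assert (Hd : h ∘ times S (@pr2 _ S a) = times S (@pr2 _ S b) ∘ times S h).
  { apply (D_faithful HDS (v := pr1) (w := pr1)).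
    - rewrite comp_assoc, Hh1. apply times_pr1.
    - rewrite comp_assoc, times_pr1. apply times_pr1.
    - pose (g := fmap D (tpair (@pr1 _ S (prod S a)) (pr1 ∘ pr2))).
      pose (x := fmap D (@pr2 _ S (prod S a))).
      assert (H : fmap D pr2 ∘ g = fmap D pr1 ∘ x).
      { unfold g, x. rewrite <- !fmap_comp, pr2_tpair. reflexivity. }
      assert (H' : fmap D pr2 ∘ g = fmap D pr1 ∘ (k ∘ x)).
      { rewrite comp_assoc, Ka. exact H. }
      pose proof (Kq _ g x H H') as EQ. simpl in EQ.
      assert (K1 : pr2 ∘ tpair (@pr1 _ S (prod S a)) (pr1 ∘ pr2) = pr1 ∘ pr2) by (psimp; reflexivity).
      assert (K2 : pr2 ∘ tpair (@pr1 _ S (prod S a)) (pr1 ∘ pr2) = pr1 ∘ (h ∘ pr2)).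
      { psimp. rewrite comp_assoc, Hh1. reflexivity. }
      rewrite (act_D0 H K1) in EQ by reflexivity.
      rewrite (act_D0 H' K2) in EQ by (try reflexivity; unfold x; rewrite <- Hh2, fmap_comp; reflexivity).
      transitivity (k ∘ fmap D (tpair (pr1 ∘ tpair (@pr1 _ S (prod S a)) (pr1 ∘ pr2)) (pr2 ∘ pr2))).
      + rewrite <- Hh2, <- fmap_comp. f_equal. f_equal. unfold times. apply prod_ext; psimp; reflexivity.
      + rewrite EQ. f_equal. unfold times. apply prod_ext; psimp; reflexivity. }
  assert (Halg : hh ∘ fmap U (adj_counit adjF (objA a)) = fmap U (adj_counit adjF (objA b)) ∘ fmap U (fmap F hh)).
  { apply alg_from_delta. apply sl_hom_eq.
    change (h ∘ proj1_sig (fmap U (sg_counit S (objA a))) =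
      proj1_sig (fmap U (sg_counit S (objA b))) ∘ proj1_sig (fmap U (fmap Sg hh))).
    rewrite (U_delta a), (U_delta b), (U_Sg hh). exact Hd. }
  destruct (eqv_full HK (exist _ hh Halg : hom (comparison adjF (objA a)) (comparison adjF (objA b)))) as [f Ef].
  exists (proj1_sig f). apply gobj_hom_eq. simpl. rewrite <- Hh2. f_equal.
  apply (f_equal (@proj1_sig _ _)) in Ef. simpl in Ef.
  apply (f_equal (@proj1_sig _ _)) in Ef. simpl in Ef.
  rewrite <- Ef. apply eq_sym, U_times.
Qed.
End Final.

Section ES.
Variables (A P : FinLimCat) (D : Functor A P) (S : A).
Hypothesis HDS : IsEquivalence (sliced_functor D S).
Local Notation U := (pullback_functor (term_hom S)).
Variables (F : Functor (Slice S) (Slice (@term A))) (adjF : Adjunction F U).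
Hypothesis HK : IsEquivalence (comparison adjF).
Local Notation S2 := (prod S S).
Local Notation G := (TheG HDS).
Local Notation Sg := (Sg S).
Local Notation th := (th adjF (SgAdj S)).

Section Desc.
Variable X : gobj G.
Local Notation p := (go_anchor X).
Variables (V : A) (v : hom V S) (i : hom (D V) (go_ob X)) (ii : hom (go_ob X) (D V)).
Hypothesis Hi : p ∘ i = fmap D v.
Hypothesis Eii1 : ii ∘ i = idm _.
Hypothesis Eii2 : i ∘ ii = idm _.

Definition gV : hom (D (prod S V)) (D S2) := fmap D (tpair (@pr1 _ S V) (v ∘ pr2)).
Lemma Hm : gsrc G ∘ gV = p ∘ (i ∘ fmap D pr2).
Proof.
  change (fmap D pr2 ∘ gV = p ∘ (i ∘ fmap D pr2)).
  unfold gV. rewrite comp_assoc, Hi, <- !fmap_comp, pr2_tpair, ?fmap_comp. reflexivity.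
Qed.
Definition actV : hom (D (prod S V)) (go_ob X) :=
  go_act X ∘ pb_pair (pullback (gsrc G) p) gV (i ∘ fmap D pr2) Hm.
Definition mV := ii ∘ actV.

Lemma mV_over : fmap D v ∘ mV = fmap D pr1.
Proof.
  unfold mV, actV. rewrite <- Hi. assoc. rewrite (cancel_r _ Eii2).
  assert (GA : (p : hom (go_ob X) (D S)) ∘ go_act X = fmap D pr1 ∘ pb_p1 (pullback (gsrc G) p))
    by exact (go_anchor_act X).
  rewrite GA, <- comp_assoc, pb_pair_p1.
  change (fmap D pr1 ∘ gV = fmap D pr1). unfold gV. rewrite <- fmap_comp, pr1_tpair. reflexivity.
Qed.


Lemma i_mV : i ∘ mV = actV.
Proof. unfold mV. apply (cancel_l _ Eii2). Qed.

Variable xi : hom (prod S V) V.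
Hypothesis Hx1 : v ∘ xi = pr1.
Hypothesis Hx2 : fmap D xi = mV.

Lemma xi_unit : xi ∘ tpair v (idm V) = idm V.
Proof.
  apply (D_faithful HDS (v := v) (w := v)).
  - rewrite comp_assoc, Hx1, pr1_tpair. reflexivity.
  - apply comp_id_r.
  - rewrite fmap_comp, Hx2, fmap_id. unfold mV, actV.
    assert (Hu : gsrc G ∘ (gid G ∘ (p ∘ i)) = p ∘ i).
    { rewrite comp_assoc, (gsrc_id G), comp_id_l. reflexivity. }
    rewrite <- !comp_assoc.
    rewrite (pb_pair_comp _ _ Hu).
    + rewrite go_unit. exact Eii1.
    + unfold gV. rewrite Hi. change (gid G) with (Gid D S). unfold Gid.
      etransitivity; [symmetry; apply fmap_comp|]. etransitivity; [|apply fmap_comp].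
      f_equal. apply prod_ext; psimp; reflexivity.
    + rewrite <- comp_assoc, <- fmap_comp, pr2_tpair, fmap_id, comp_id_r. reflexivity.
Qed.

Lemma xi_assoc : xi ∘ times S xi = xi ∘ times S (@pr2 _ S V).
Proof.
  apply (D_faithful HDS (v := pr1) (w := v)).
  - rewrite comp_assoc, Hx1. apply times_pr1.
  - rewrite comp_assoc, Hx1. apply times_pr1.
  - rewrite !fmap_comp, Hx2. apply (iso_mono (ex_intro _ ii (conj Eii1 Eii2))).
    rewrite !comp_assoc, i_mV. unfold actV. rewrite <- !comp_assoc.
    pose (gg := fmap D (tpair (@pr1 _ S (prod S V)) (pr1 ∘ pr2)) : hom _ (g1 G)).
    pose (ff := fmap D (tpair (pr1 ∘ @pr2 _ S (prod S V)) (v ∘ pr2 ∘ pr2)) : hom _ (g1 G)).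
    pose (xx := i ∘ fmap D (pr2 ∘ @pr2 _ S (prod S V))).
    assert (H1 : gsrc G ∘ gg = gtgt G ∘ ff).
    { unfold gg, ff. simpl. rewrite <- !fmap_comp. f_equal. psimp. reflexivity. }
    assert (H2 : gsrc G ∘ ff = p ∘ xx).
    { unfold ff, xx. rewrite comp_assoc, Hi.
      etransitivity; [symmetry; apply fmap_comp|]. etransitivity; [|apply fmap_comp].
      f_equal. psimp. reflexivity. }
    assert (H4 : gsrc G ∘ gg = p ∘ (go_act X ∘ pb_pair (pullback (gsrc G) p) ff xx H2)).
    { assert (GA : p ∘ go_act X = gtgt G ∘ pb_p1 (pullback (gsrc G) p)) by exact (go_anchor_act X).
      rewrite comp_assoc, GA, <- comp_assoc, pb_pair_p1. exact H1. }
    assert (H3 : gsrc G ∘ (gcomp G ∘ pb_pair (pullback (gsrc G) (gtgt G)) gg ff H1) = p ∘ xx).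
    { rewrite comp_assoc, (gsrc_comp G), <- comp_assoc, pb_pair_p2. exact H2. }
    pose proof (go_assoc H3 H4) as EQ.
    transitivity (go_act X ∘ pb_pair (pullback (gsrc G) p) gg (go_act X ∘ pb_pair (pullback (gsrc G) p) ff xx H2) H4).
    + f_equal. apply pb_pair_comp.
      * unfold gV, gg. apply fmap_comp_eq. unfold times. psimp.
        apply tpair_ext; [reflexivity|]. rewrite comp_assoc, Hx1. reflexivity.
      * unfold times. rewrite <- comp_assoc, <- fmap_comp, pr2_tpair, fmap_comp, comp_assoc, Hx2.
        rewrite i_mV. unfold actV. rewrite <- comp_assoc. f_equal.
        apply pb_pair_comp.
        -- unfold gV, ff. apply fmap_comp_eq. psimp. reflexivity.
        -- unfold xx. rewrite <- comp_assoc, <- fmap_comp. reflexivity.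
    + rewrite <- EQ. f_equal. apply eq_sym, pb_pair_comp.
      * unfold gV. etransitivity; [symmetry; apply fmap_comp|]. apply eq_sym.
        change (gcomp G) with (Gcomp HDS).
        assert (K : pr2 ∘ tpair (@pr1 _ S (prod S V)) (pr1 ∘ pr2) =
                    pr1 ∘ tpair (pr1 ∘ @pr2 _ S (prod S V)) (v ∘ pr2 ∘ pr2)) by (psimp; reflexivity).
        etransitivity; [exact (gcomp_D0 HDS H1 K eq_refl eq_refl)|].
        f_equal. unfold times. psimp. reflexivity.
      * unfold times, xx. rewrite <- comp_assoc, <- fmap_comp, pr2_tpair, fmap_comp. reflexivity.
Qed.
End Desc.

Lemma alg_mult_gen (V : Slice S) (x : hom (U (Sg V)) V) :
  x ∘ fmap U (fmap Sg x) = x ∘ fmap U (sg_counit S (Sg V)) ->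
  (x ∘ fmap U (th V)) ∘ fmap U (fmap F (x ∘ fmap U (th V))) =
  (x ∘ fmap U (th V)) ∘ fmap U (adj_counit adjF (F V)).
Proof.
  intros Hx.
  assert (A1 : fmap U (th V) ∘ fmap U (fmap F x) = fmap U (fmap Sg x) ∘ fmap U (th (U (Sg V)))).
  { rewrite <- !fmap_comp. f_equal. apply th_nat. }
  assert (A2 : fmap U (adj_counit adjF (F V)) = fmap U (sg_counit S (F V)) ∘ fmap U (th (U (F V)))).
  { rewrite <- fmap_comp. f_equal. symmetry. apply (th_counit adjF (SgAdj S) (F V)). }
  assert (A3 : fmap U (th V) ∘ fmap U (sg_counit S (F V)) =
               fmap U (sg_counit S (Sg V)) ∘ fmap U (fmap Sg (fmap U (th V)))).
  { rewrite <- !fmap_comp. f_equal. apply (adj_counit_nat (SgAdj S) (th V)). }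
  assert (A4 : fmap U (fmap Sg (fmap U (th V))) ∘ fmap U (th (U (F V))) =
               fmap U (th (U (Sg V))) ∘ fmap U (fmap F (fmap U (th V)))).
  { rewrite <- !fmap_comp. f_equal. symmetry. apply th_nat. }
  rewrite !fmap_comp, A2. assoc.
  rewrite (assoc_rw A1), (assoc_rw A3).
  rewrite Hx.
  rewrite (assoc_rw A4). reflexivity.
Qed.

Lemma Phi_es (X : gobj G) : exists a (k : hom (Phi HDS a) X), is_iso k.
Proof.
  destruct (D_es HDS (go_anchor X)) as (V & v & i & Hi & Ii).
  pose proof Ii as [ii [E1 E2]].
  destruct (D_full HDS (v := pr1) (w := v) (m := mV ii Hi) (mV_over Hi E2)) as (xi & Hx1 & Hx2).
  pose (Vs := existT _ V v : Slice S).
  pose (xis := exist _ xi Hx1 : hom (U (Sg Vs)) Vs).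
  pose (alg := xis ∘ fmap U (th Vs)).
  assert (Hu : alg ∘ adj_unit adjF Vs = idm Vs).
  { unfold alg. rewrite <- comp_assoc, th_unit. apply sl_hom_eq. simpl.
    etransitivity; [|exact (xi_unit E1 Hx1 Hx2)]. f_equal. apply pb_pair_ext; reflexivity. }
  assert (Hxa : xis ∘ fmap U (fmap Sg xis) = xis ∘ fmap U (sg_counit S (Sg Vs))).
  { apply sl_hom_eq.
    change (xi ∘ proj1_sig (fmap U (fmap Sg xis)) = xi ∘ proj1_sig (fmap U (sg_counit S (Sg Vs)))).
    etransitivity; [|etransitivity; [exact (xi_assoc E1 E2 Hx1 Hx2)|]].
    - f_equal. apply pb_pair_ext; reflexivity.
    - f_equal. apply pb_pair_ext; reflexivity. }
  pose (algX := Build_em_ob (alg_ob := Vs) (alg_str := alg) Hu (alg_mult_gen Hxa)).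
  destruct (eqv_es HK algX) as [[a t] [e Ie]].
  assert (Et : t = term_hom a) by apply term_uniq. subst t.
  pose (e0 := proj1_sig e : hom (U (objA a)) Vs). pose proof (proj2_sig e) as He. fold e0 in He.
  pose (e' := proj1_sig e0 : hom (prod S a) V).
  assert (He' : v ∘ e' = pr1) by exact (proj2_sig e0).
  assert (Ie' : is_iso e').
  { destruct Ie as [e2 [F1 F2]]. exists (proj1_sig (proj1_sig e2)). split.
    - exact (f_equal (@proj1_sig _ _) (f_equal (@proj1_sig _ _) F1)).
    - exact (f_equal (@proj1_sig _ _) (f_equal (@proj1_sig _ _) F2)). }
  assert (Hd : e0 ∘ fmap U (sg_counit S (objA a)) = xis ∘ fmap U (fmap Sg e0)).
  { apply (iso_epi (fmap_iso U (th_iso adjF (SgAdj S) (U (objA a))))).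
    assert (Z : fmap U (sg_counit S (objA a)) ∘ fmap U (th (U (objA a))) = fmap U (adj_counit adjF (objA a))) by (apply fmap_comp_eq; exact (th_counit adjF (SgAdj S) (objA a))).
    transitivity (e0 ∘ fmap U (adj_counit adjF (objA a))); [rewrite <- Z; apply eq_sym, comp_assoc|].
    transitivity (alg ∘ fmap U (fmap F e0)); [exact He|].
    unfold alg. rewrite <- !comp_assoc. f_equal. rewrite <- !fmap_comp. f_equal. apply th_nat. }
  apply (f_equal (@proj1_sig _ _)) in Hd.
  change (e' ∘ proj1_sig (fmap U (sg_counit S (objA a))) = xi ∘ proj1_sig (fmap U (fmap Sg e0))) in Hd.
  rewrite (U_delta S a), (U_Sg e0) in Hd. fold e' in Hd.
  assert (Keq : @is_equivariant _ G (Phi HDS a) X (i ∘ fmap D e')).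
  { split.
    - change (go_anchor X ∘ (i ∘ fmap D e') = fmap D pr1).
      transitivity (fmap D v ∘ fmap D e'); [rewrite <- Hi; apply comp_assoc | rewrite <- fmap_comp; f_equal; exact He'].
    - intros W g x H H'.
      change (hom W (D (prod S S))) in g. change (hom W (D (prod S a))) in x.
      assert (H0 : fmap D (@pr2 _ S S) ∘ g = fmap D (@pr1 _ S a) ∘ x) by exact H.
      destruct (D_es HDS (fmap D (@pr1 _ S S) ∘ g)) as (V' & v' & j & Hj & Ij).
      destruct (D_full HDS (v := v') (w := @pr1 _ S S) (m := g ∘ j)) as (g' & Hg1 & Hg2).
      { rewrite comp_assoc. exact Hj. }
      destruct (D_full HDS (v := pr2 ∘ g') (w := @pr1 _ S a) (m := x ∘ j)) as (x' & Hx1' & Hx2').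
      { rewrite comp_assoc, <- H0, <- comp_assoc, <- Hg2, fmap_comp. reflexivity. }
      apply (iso_epi Ij).
      assert (K1 : pr2 ∘ g' = pr1 ∘ x') by auto.
      assert (EA : go_act (Phi HDS a) ∘ pb_pair (pullback (gsrc G) (go_anchor (Phi HDS a))) g x H ∘ j
                   = fmap D (tpair (pr1 ∘ g') (pr2 ∘ x')))
        by exact (act_Dj HDS H K1 (eq_sym Hg2) (eq_sym Hx2')).
      assert (Hc : gsrc G ∘ fmap D g' = go_anchor X ∘ (i ∘ fmap D (e' ∘ x'))).
      { transitivity (fmap D v ∘ fmap D (e' ∘ x')); [|rewrite <- Hi; apply eq_sym, comp_assoc].
        etransitivity; [apply fmap_comp_eq; reflexivity|]. symmetry. apply fmap_comp_eq.
        rewrite comp_assoc. transitivity (pr1 ∘ x'); [f_equal; exact He' | auto]. }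
      assert (EB : i ∘ fmap D (xi ∘ tpair (pr1 ∘ g') (e' ∘ x')) =
                   go_act X ∘ pb_pair (pullback (gsrc G) (go_anchor X)) (fmap D g') (i ∘ fmap D (e' ∘ x')) Hc).
      { rewrite fmap_comp, Hx2, comp_assoc, (i_mV Hi E2). unfold actV. rewrite <- comp_assoc. f_equal.
        apply pb_pair_comp.
        - unfold gV. apply fmap_comp_eq. apply prod_ext; psimp; [reflexivity|].
          rewrite comp_assoc. transitivity (pr1 ∘ x'); [f_equal; exact He' | auto].
        - rewrite <- comp_assoc, <- fmap_comp, pr2_tpair. reflexivity. }
      rewrite <- comp_assoc, EA.
      rewrite <- (comp_assoc (go_act X)), (pb_pair_comp _ _ Hc).
      + rewrite <- EB, <- (comp_assoc i). f_equal. etransitivity; [symmetry; apply fmap_comp|]. f_equal.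
        transitivity (e' ∘ (times S pr2 ∘ tpair (pr1 ∘ g') x')).
        { f_equal. unfold times. psimp. reflexivity. }
        rewrite comp_assoc. transitivity (xi ∘ times S e' ∘ tpair (pr1 ∘ g') x'); [f_equal; exact Hd|].
        rewrite <- comp_assoc. f_equal. unfold times. psimp. reflexivity.
      + auto.
      + rewrite <- (comp_assoc (i ∘ fmap D e')), <- Hx2', fmap_comp. apply eq_sym, comp_assoc. }
  exists a, (exist _ (i ∘ fmap D e') Keq). apply eqv_iso. simpl.
  apply iso_comp; [apply fmap_iso; exact Ie' | exact Ii].
Qed.

End ES.

Theorem proposition1p1 (A P : FinLimCat) (D : Functor A P) (C : Functor P A)
  (adj : Adjunction D C) (S : A) :
  effective_descent (term_hom S) ->
  IsEquivalence (sliced_functor D S) ->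
  exists G : InternalGroupoid P, Equivalent A (GObjCat G).
Proof.
  intros [F [adjF HK]] HDS.
  exists (TheG HDS). exists (Phi HDS).
  apply ffes_equiv.
  - intros a b f g E. exact (Phi_faithful HK E).
  - intros a b k. exact (Phi_full HK k).
  - intros X. exact (Phi_es HK X).
Qed.
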